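(* Let $p$ be a prime and let $\Phi_p$ be the set of all $\operatorname{fpt}(R,f)$, where $R$ ranges over $F$-pure rings of characteristic $p$ and $f$ over non-zero non-units of $R$. Let $\lambda\in\Phi_p$ and $e\ge1$. Then the following three statements hold (and are equivalent): (1) $\lfloor (p^e-1)\lambda\rfloor = p^e\langle\lambda\rangle_e$; (2) $\lambda\le p^e\,\langle\lambda\rangle^e$; (3) $\lambda\ge \frac{p^e}{p^e-1}\langle\lambda\rangle_e$.
   Context: A ring $R$ of characteristic $p$ is $F$-pure if $R\subseteq R^{1/p}$ splits as a map of $R$-modules. Roots and splitting. $R^{1/p^e}$ is the ring of formal $p^e$-th roots of elements of $R$, containing $R$ via $r\mapsto(r^{p^e})^{1/p^e}$. We write $f^{a/p^e}:=(f^a)^{1/p^e}$. The inclusion $R\cdot t\subseteq R^{1/p^e}$ splits if some $R$-linear $\theta:R^{1/p^e}\to R$ has $\theta(t)=1$. $F$-pure threshold. $(R,f^\lambda)$ is $F$-pure if $R\cdot f^{\lfloor (p^e-1)\lambda\rfloor/p^e}\subseteq R^{1/p^e}$ splits for all $e\ge1$. $\operatorname{fpt}(R,f)$ is the supremum of all $\lambda\ge0$ with $(R,f^\lambda)$ $F$-pure; it lies in $[0,1]$. Truncations and tails. For $\alpha\in(0,1]$ with non-terminating base $p$ expansion $\alpha=\sum_{e\ge1}a_e/p^e$ (digits $0\le a_e\le p-1$, not all eventually zero): - the $e$-th truncation is $\langle\alpha\rangle_e:=\sum_{i=1}^e a_i/p^i$; - the $e$-th tail is $\langle\alpha\rangle^e:=\alpha-\langle\alpha\rangle_e$.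 By convention $\langle0\rangle_e=\langle0\rangle^e=0$. *)

(* Defs.v *)
From HB Require Import structures.
From mathcomp Require Import all_boot all_order all_algebra.
From mathcomp Require Import boolp classical_sets reals topology normedtype sequences.
From mathcomp Require Import Rstruct Rstruct_topology.
Set Implicit Arguments. Unset Strict Implicit. Unset Printing Implicit Defensive.
Import Order.TTheory GRing.Theory Num.Theory.
From Stdlib Require Rdefinitions.
Notation R := Rdefinitions.R.
Local Open Scope ring_scope.
Local Open Scope classical_set_scope.

(* Identify R^{1/q} (q = p^e) with R itself via x^{1/q} <-> x.  Then the
   R-module structure on R^{1/q} is  r . x = r^q * x, and an R-linear map
   theta : R^{1/q} -> R is an additive map with theta (r^q * x) = r * theta x.
   [splits_at A q t] : the inclusion R . t^{1/q} ⊆ R^{1/q} splits, i.e. some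
   R-linear theta : R^{1/q} -> R has theta(t^{1/q}) = 1. *)
Definition splits_at (A : comNzRingType) (q : nat) (t : A) : Prop :=
  exists theta : A -> A,
    [/\ forall x y : A, theta (x + y) = theta x + theta y,
        forall r x : A, theta (r ^+ q * x) = r * theta x
      & theta t = 1].

(* R is F-pure: R ⊆ R^{1/p} splits (the image of 1 is 1^{1/p}). *)
Definition Fpure (A : comNzRingType) (p : nat) : Prop := @splits_at A p 1.

(* (R, f^lambda) is F-pure: for every e >= 1, R . f^{floor((p^e-1)lambda)/p^e}
   ⊆ R^{1/p^e} splits.  (Only used for lambda >= 0, where truncn = floor.) *)
Definition Fpure_pair (A : comNzRingType) (p : nat) (f : A) (lam : R) : Prop :=
  forall e : nat, (0 < e)%N ->
    @splits_at A (p ^ e) (f ^+ Num.truncn (((p ^ e)%:R - 1) * lam)).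

Definition fpt (A : comNzRingType) (p : nat) (f : A) : R :=
  sup [set lam : R | 0 <= lam /\ Fpure_pair p f lam].

Definition is_unit_elt (A : comNzRingType) (f : A) : Prop := exists g : A, f * g = 1.

Definition Phi (p : nat) (lam : R) : Prop :=
  exists (A : comNzRingType) (f : A),
    [/\ p \in [pchar A], Fpure A p, f != 0, ~ is_unit_elt f & lam = fpt p f].

(* a : nat -> nat (index 0 unused) is a non-terminating base-p expansion of
   alpha:  alpha = sum_{i>=1} a_i / p^i, digits 0 <= a_i <= p-1, not all
   eventually zero. *)
Definition nonterm_expansion (p : nat) (a : nat -> nat) (alpha : R) : Prop :=
  [/\ forall i, (a i < p)%N,
      forall N : nat, exists i : nat, (N < i)%N /\ a i != 0%N
    & (fun n : nat => \sum_(1 <= i < n.+1) ((a i)%:R / (p ^ i)%:R : R))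
        @ \oo --> alpha].

(* e-th truncation  <alpha>_e = sum_{i=1}^e a_i/p^i  (0 when alpha has no
   non-terminating expansion, in particular <0>_e = 0). *)
Definition truncation (p : nat) (alpha : R) (e : nat) : R :=
  match pselect (exists a, nonterm_expansion p a alpha) with
  | left H => let a := projT1 (cid H) in
              \sum_(1 <= i < e.+1) ((a i)%:R / (p ^ i)%:R)
  | right _ => 0
  end.

Definition tail (p : nat) (alpha : R) (e : nat) : R :=
  alpha - truncation p alpha e.

(* Main.v *)
Require Import Defs.
From HB Require Import structures.
From mathcomp Require Import all_boot all_order all_algebra.
From mathcomp Require Import boolp classical_sets reals topology normedtype sequences.
From mathcomp Require Import Rstruct Rstruct_topology.
From mathcomp Require Import ring lra.
Import Order.TTheory GRing.Theory Num.Theory.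
Local Open Scope ring_scope.
Module Aux.
Local Open Scope classical_set_scope.

Section Alg.
Variable A : comNzRingType.

Lemma splits1 : @splits_at A 1 1.
Proof. exists id; split => // r x; by rewrite expr1. Qed.

Lemma splits_comp q1 q2 a b (f : A) :
  splits_at q1 (f ^+ a) -> splits_at q2 (f ^+ b) ->
  splits_at (q1 * q2) (f ^+ (b + q2 * a)).
Proof.
move=> [t1 [t1D t1M t1f]] [t2 [t2D t2M t2f]].
exists (t1 \o t2); split => /=.
- by move=> x y; rewrite t2D t1D.
- by move=> r x; rewrite exprM t2M t1M.
- by rewrite exprD mulnC exprM mulrC t2M t2f mulr1 t1f.
Qed.

Lemma splits_down q n n' (f : A) : (n' <= n)%N ->
  splits_at q (f ^+ n) -> splits_at q (f ^+ n').
Proof.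
move=> le [t [tD tM tf]].
exists (fun x => t (f ^+ (n - n')%N * x)); split.
- by move=> x y; rewrite mulrDr tD.
- by move=> r x; rewrite mulrCA tM.
- by rewrite -exprD subnK.
Qed.

Lemma splits_unit q n (f : A) : (q <= n)%N -> splits_at q (f ^+ n) -> is_unit_elt f.
Proof.
move=> le [t [tD tM tf]].
exists (t (f ^+ (n - q)%N)).
by rewrite -tM -exprD subnKC.
Qed.

Lemma frobD (p j : nat) (x y : A) : p \in [pchar A] ->
  (x + y) ^+ (p ^ j) = x ^+ (p ^ j) + y ^+ (p ^ j).
Proof.
move=> hp; elim: j => [|j IH]; first by rewrite !expr1.
rewrite expnSr !exprM IH exprDn_pchar // pnatE //; exact: pcharf_prime hp.
Qed.

Lemma splits_reduce (p : nat) q j n (f : A) : p \in [pchar A] ->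
  splits_at (q * p ^ j) (f ^+ n) -> splits_at q (f ^+ (n %/ p ^ j)).
Proof.
move=> hp [t [tD tM tf]].
exists (fun x => t (f ^+ (n %% p ^ j)%N * x ^+ (p ^ j))); split.
- by move=> x y; rewrite frobD // mulrDr tD.
- by move=> r x; rewrite exprMn -exprM mulrCA tM.
- by rewrite -exprM -exprD addnC -divn_eq.
Qed.

Lemma splits_pow q (f : A) : Fpure A q -> forall k, splits_at (q ^ k) (f ^+ 0).
Proof.
move=> hF; elim => [|k IH]; first by rewrite expn0 expr0; exact: splits1.
rewrite expnS mulnC.
have hF0 : splits_at q (f ^+ 0) by rewrite expr0.
have := @splits_comp (q ^ k) q 0 0 f IH hF0; by rewrite muln0 addn0.
Qed.
End Alg.

Lemma arch_pow (p : nat) (d : R) (N : nat) : (1 < p)%N -> 0 < d ->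
  exists i, (N <= i)%N /\ 1 / (p ^ i)%:R < d.
Proof.
move=> p1 d0.
set t := Num.truncn (d^-1).
exists (N + t)%N; split; first exact: leq_addr.
have h1 : d^-1 < (t.+1)%:R by exact: truncnS_gt.
have h2 : (t.+1 <= p ^ (N + t))%N.
  apply: leq_ltn_trans (ltn_expl (N + t) p1); exact: leq_addl.
have h3 : (t.+1)%:R <= (p ^ (N + t))%:R :> R by rewrite ler_nat.
have hp : 0 < (p ^ (N + t))%:R :> R by rewrite ltr0n expn_gt0; move: p1; case: (p) => //.
rewrite ltr_pdivrMr // mulrC -ltr_pdivrMr // div1r.
exact: lt_le_trans h1 h3.
Qed.

Lemma lim_le_seq (u : nat -> R) l B N : u @ \oo --> l ->
  (forall n, (N <= n)%N -> u n <= B) -> l <= B.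
Proof.
move=> hc hB; rewrite leNgt; apply/negP => hl.
have := cvgr_gt l hc B hl; move=> [M _ HM].
have := HM (maxn N M) (leq_maxr _ _); have := hB _ (leq_maxl N M).
move=> h1 h2 /=; lra.
Qed.
Lemma lim_ge_seq (u : nat -> R) l B N : u @ \oo --> l ->
  (forall n, (N <= n)%N -> B <= u n) -> B <= l.
Proof.
move=> hc hB; rewrite leNgt; apply/negP => hl.
have := cvgr_lt l hc B hl; move=> [M _ HM].
have := HM (maxn N M) (leq_maxr _ _); have := hB _ (leq_maxl N M).
move=> h1 h2 /=; lra.
Qed.

Section Exp.
Variables (p : nat) (a : nat -> nat).
Hypothesis p1 : (1 < p)%N.
Let s n : R := \sum_(1 <= i < n.+1) (a i)%:R / (p ^ i)%:R.

Lemma pos_pow n : 0 < (p ^ n)%:R :> R.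
Proof. by rewrite ltr0n expn_gt0; move: p1; case: (p). Qed.

Lemma sS n : s n.+1 = s n + (a n.+1)%:R / (p ^ n.+1)%:R.
Proof. by rewrite /s big_nat_recr. Qed.

Lemma s_nat n : exists m : nat, s n = m%:R / (p ^ n)%:R.
Proof.
elim: n => [|n [m Hm]]; first by exists 0%N; rewrite /s big_geq // mul0r.
exists (p * m + a n.+1)%N; rewrite sS Hm expnS !natrM natrD natrM.
have := pos_pow n; have : 0 < p%:R :> R by rewrite ltr0n; case: (p) p1.
move=> h1 h2; field; apply/andP; split; exact: lt0r_neq0.
Qed.

Lemma s_up e k : (forall i, (a i < p)%N) -> s (e + k) - s e <= 1 / (p ^ e)%:R - 1 / (p ^ (e + k))%:R.
Proof.
move=> ha; elim: k => [|k IH]; first by rewrite addn0 !subrr.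
rewrite addnS sS.
have hP := pos_pow (e + k).
have hp : 0 < p%:R :> R by rewrite ltr0n; case: (p) p1.
have hak : (a (e + k).+1)%:R <= p%:R - 1 :> R.
  have : ((a (e + k).+1).+1%:R : R) <= p%:R by rewrite ler_nat ha.
  rewrite -natr1; lra.
rewrite expnS natrM.
set P := (p ^ (e + k))%:R in IH hP *.
set A := (a (e + k).+1)%:R in hak *.
have -> : A / (p%:R * P) = A / p%:R * (1 / P).
  by field; apply/andP; split; apply: lt0r_neq0.
have hAp : A / p%:R <= 1 - 1 / p%:R.
  rewrite ler_pdivrMr // mulrBl !mul1r mulVf ?lt0r_neq0 //; lra.
have hP1 : 0 < 1 / P by rewrite div1r invr_gt0.
have : A / p%:R * (1 / P) <= (1 - 1 / p%:R) * (1 / P) by rewrite ler_pM2r.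
have -> : 1 / (p%:R * P) = 1 / p%:R * (1 / P).
  by field; apply/andP; split; apply: lt0r_neq0.
lra.
Qed.

Lemma s_mono n k : s n <= s (n + k).
Proof.
elim: k => [|k IH]; first by rewrite addn0.
rewrite addnS sS; apply: (le_trans IH); rewrite lerDl divr_ge0 // ltW // pos_pow.
Qed.

Lemma s_jump i : a i.+1 != 0%N -> s i + 1 / (p ^ i.+1)%:R <= s i.+1.
Proof.
move=> hi; rewrite sS lerD2l ler_pM2r ?invr_gt0 ?pos_pow // ler1n lt0n //.
Qed.

Lemma exp_bounds lam e : nonterm_expansion p a lam ->
  exists m : nat, [/\ s e = m%:R / (p ^ e)%:R, m%:R / (p ^ e)%:R < lam
    & lam <= m.+1%:R / (p ^ e)%:R].
Proof.
move=> [ha hnt hc].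
have [m Hm] := s_nat e.
exists m; split => //.
- have [i [hi hai]] := hnt e.
  have : s e + 1 / (p ^ i)%:R <= lam.
    apply: (@lim_ge_seq _ _ _ i hc) => n hn.
    case: i hi hai hn => [//|i] hi hai hn.
    have h1 := s_mono i.+1 (n - i.+1); rewrite subnKC // in h1.
    have h2 := s_jump i hai.
    have h3 := s_mono e (i - e); rewrite subnKC // in h3.
    change (s e + 1 / (p ^ i.+1)%:R <= s n); lra.
  have := pos_pow i; rewrite -Hm => hP h.
  have : 0 < 1 / (p ^ i)%:R :> R by rewrite div1r invr_gt0.
  lra.
- have : lam <= s e + 1 / (p ^ e)%:R.
    apply: (@lim_le_seq _ _ _ e hc) => n hn.
    have := s_up e (n - e) ha; rewrite subnKC //.
    have : 0 < 1 / (p ^ n)%:R :> R by rewrite div1r invr_gt0 pos_pow.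
    move=> h1 h2; change (s n <= s e + 1 / (p ^ e)%:R); lra.
  by rewrite Hm -natr1 mulrDl.
Qed.
End Exp.

Definition cc (x : R) : int := - Num.floor (- x) - 1.

Lemma cc_itv x : (cc x)%:~R < x /\ x <= (cc x)%:~R + 1.
Proof.
have /andP[h1 h2] := floor_itv (- x).
have e1 : (1 : int)%:~R = 1 :> R by [].
rewrite /cc intrB intrN intrD e1 in h2 *.
split; lra.
Qed.

Lemma inv_pow_le (p i n : nat) : (1 < p)%N -> (i <= n)%N ->
  1 / (p ^ n)%:R <= 1 / (p ^ i)%:R :> R.
Proof.
move=> p1 hin; rewrite !div1r lef_pV2 ?posrE ?pos_pow // ler_nat leq_pexp2l //.
exact: ltnW.
Qed.

Section Ex.
Variables (p : nat) (lam : R).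
Hypotheses (p1 : (1 < p)%N) (l0 : 0 < lam) (l1 : lam <= 1).
Let c i := cc ((p ^ i)%:R * lam).
Let C i : R := (c i)%:~R.
Let d i : int := c i.+1 - p%:Z * c i.
Let a i := `|d i.-1|%N.

Lemma hp : 0 < p%:R :> R.
Proof. by rewrite ltr0n; case: (p) p1. Qed.

Lemma C_itv i : C i < (p ^ i)%:R * lam /\ (p ^ i)%:R * lam <= C i + 1.
Proof. exact: cc_itv. Qed.

Lemma c0 : c 0 = 0.
Proof.
rewrite /c expn0 mul1r /cc.
suff -> : Num.floor (- lam) = -1 by [].
apply: floor_def; rewrite addNr intrN /=.
have e1 : (1 : int)%:~R = 1 :> R by [].
have e0 : (0 : int)%:~R = 0 :> R by [].
by rewrite e0 mulr1z lerN2 oppr_lt0 l0 l1.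
Qed.

Lemma d_cast i : (d i)%:~R = C i.+1 - p%:R * C i :> R.
Proof. by rewrite /d intrB intrM /C. Qed.

Lemma d_bounds i : (0 <= d i) /\ (d i < p%:Z).
Proof.
have [h1 h2] := C_itv i; have [h3 h4] := C_itv i.+1.
have e : (p ^ i.+1)%:R * lam = p%:R * ((p ^ i)%:R * lam) :> R by rewrite expnS natrM mulrA.
rewrite e in h3 h4.
have hp := hp.
split.
- rewrite -ltzD1 -(ltr_int R) intrD d_cast /= -[X in X < _]/((0 : int)%:~R) .
  rewrite [X in X < _]/=.
  nra.
- rewrite -(ltr_int R) d_cast.
  rewrite [X in _ < X]/=.
  nra.
Qed.

Lemma d_nat i : ((`|d i|%N : nat) : int) = d i.
Proof. by rewrite abszE ger0_norm //; case: (d_bounds i). Qed.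

Lemma a_cast i : ((a i.+1)%:R : R) = (d i)%:~R.
Proof. by rewrite /a /= -(d_nat i). Qed.

Lemma a_lt i : (a i < p)%N.
Proof.
have [h0 h1] := d_bounds i.-1.
by rewrite /a -ltz_nat d_nat.
Qed.

Lemma psum n : \sum_(1 <= i < n.+1) (a i)%:R / (p ^ i)%:R = C n / (p ^ n)%:R.
Proof.
elim: n => [|n IH].
  by rewrite big_geq // /C c0 mul0r.
rewrite big_nat_recr //= IH a_cast d_cast expnS natrM.
have hP := pos_pow p p1 n; have hp := hp.
by field; apply/andP; split; apply: lt0r_neq0.
Qed.

Lemma psum_bounds n : C n / (p ^ n)%:R < lam /\ lam <= C n / (p ^ n)%:R + 1 / (p ^ n)%:R.
Proof.
have hP := pos_pow p p1 n; have [h1 h2] := C_itv n.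
split.
- by rewrite ltr_pdivrMr // mulrC.
- by rewrite -mulrDl ler_pdivlMr // mulrC.
Qed.

Lemma exists_exp : exists a, nonterm_expansion p a lam.
Proof.
exists a; split.
- exact: a_lt.
- move=> N.
  case: (pselect (exists i, (N < i)%N /\ a i != 0%N)) => // H; exfalso.
  have H0 : forall i, (N <= i)%N -> C i.+1 = p%:R * C i.
    move=> i hi; case: (eqVneq (a i.+1) 0%N) => [h0|hne]; last first.
      by exfalso; apply: H; exists i.+1.
    have : (d i)%:~R = 0 :> R.
      by rewrite -a_cast h0.
    rewrite d_cast; lra.
  have H1 : forall k, C (N + k) = (p ^ k)%:R * C N.
    elim=> [|k IH]; first by rewrite addn0 mul1r.
    by rewrite addnS H0 ?leq_addr // IH expnS natrM mulrA.
  have [hlt _] := psum_bounds N.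
  have hd0 : 0 < lam - C N / (p ^ N)%:R by rewrite subr_gt0.
  have [i [hi hd]] := @arch_pow p _ N p1 hd0.
  have [_ hup] := psum_bounds i.
  have e2 : C i / (p ^ i)%:R = C N / (p ^ N)%:R.
    rewrite -(subnKC hi) H1 expnD natrM.
    have h1 := pos_pow p p1 N; have h2 := pos_pow p p1 (i - N).
    by field; apply/andP; split; apply: lt0r_neq0.
  rewrite e2 in hup; lra.
- apply/(@cvgrPdist_lt _ R^o) => eps he.
  have [i [_ hi]] := @arch_pow p _ 0 p1 he.
  exists i => // n /= hn.
  rewrite psum; have [h1 h2] := psum_bounds n.
  have h3 := inv_pow_le p i n p1 hn.
  rewrite ger0_norm; first lra.
  by rewrite subr_ge0 ltW.
Qed.
End Ex.

Section Main.
Variables (A : comNzRingType) (p : nat) (f : A).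
Hypotheses (pp : prime p) (hch : p \in [pchar A]) (hF : Fpure A p)
  (hnu : ~ is_unit_elt f).
Let S := [set lam : R | 0 <= lam /\ Fpure_pair p f lam].
Let p1 : (1 < p)%N := prime_gt1 pp.

Lemma S0 : S 0.
Proof.
split => // k k0; rewrite mulr0 truncn0; exact: splits_pow hF k.
Qed.

Lemma Sub_le x : S x -> x <= 1.
Proof.
move=> [x0 hx]; rewrite leNgt; apply/negP => x1.
have hd : 0 < (x - 1) / x by rewrite divr_gt0 // ?subr_gt0 //; lra.
have [k [k1 hk]] := @arch_pow p _ 1 p1 hd.
have hP := pos_pow p p1 k.
have h1 : x < (p ^ k)%:R * (x - 1).
  have x0' : 0 < x by lra.
  move: hk; rewrite ltr_pdivrMr // mulrAC ltr_pdivlMr // mul1r mulrC //.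
have h2 : (p ^ k <= Num.truncn (((p ^ k)%:R - 1) * x))%N.
  rewrite truncn_ge_nat; first lra.
  have : 1 <= (p ^ k)%:R :> R by rewrite ler1n expn_gt0 ltnW.
  move=> h; apply: mulr_ge0 => //; lra.
apply: hnu; exact: splits_unit h2 (hx k k1).
Qed.

Lemma hsup : has_sup S.
Proof. split; [by exists 0; exact: S0 | by exists 1 => x hx; exact: Sub_le _ hx]. Qed.

Definition NN (q m k : nat) := iter k (fun x => m + q * x)%N 0%N.

Lemma Nsplit q m : splits_at q (f ^+ m) -> forall k, splits_at (q ^ k) (f ^+ NN q m k).
Proof.
move=> hm; elim=> [|k IH]; first by rewrite expn0 /NN /= expr0; exact: splits1.
rewrite expnSr /NN iterS -/(NN q m k).
exact: splits_comp IH hm.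
Qed.

Lemma Nreal q m k : (NN q m k)%:R * (q%:R - 1) = m%:R * ((q ^ k)%:R - 1) :> R.
Proof.
elim: k => [|k IH]; first by rewrite /NN /= expn0 !mul0r subrr mulr0.
rewrite /NN iterS -/(NN q m k) natrD natrM expnS natrM.
rewrite mulrDl -mulrA IH; ring.
Qed.

Lemma key e m : (0 < e)%N -> m%:R / (p ^ e)%:R < fpt p f ->
  m%:R / ((p ^ e)%:R - 1) <= fpt p f.
Proof.
move=> e0 hm.
set q := (p ^ e)%N.
have q1 : (1 < q)%N by apply: leq_ltn_trans (ltn_expl e p1).
have hq : 1 < q%:R :> R by rewrite ltr1n.
have hq1 : 0 < q%:R - 1 :> R by rewrite subr_gt0.
have heps : 0 < fpt p f - m%:R / q%:R by rewrite subr_gt0.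
have [mu Smu hmu] := sup_adherent heps hsup.
have Smu0 := Smu.
have mu1 := Sub_le _ Smu.
have [mu0 Fmu] := Smu.
have hdd : 0 < q%:R * mu - m%:R.
  have : m%:R / q%:R < mu by move: hmu; rewrite /fpt -/S; lra.
  rewrite ltr_pdivrMr ?(lt_trans ltr01 hq) // => h; lra.
have [K [_ hK]] := @arch_pow q _ 0 q1 hdd.
have hQ := pos_pow q q1 K.
have hK' : 1 < (q ^ K)%:R * (q%:R * mu - m%:R).
  by move: hK; rewrite ltr_pdivrMr // mulrC.
have eK : (0 < e * K.+1)%N by rewrite muln_gt0 e0.
have hsp := Fmu _ eK.
rewrite expnM -/q in hsp.
have ht : (m * q ^ K <= Num.truncn (((q ^ K.+1)%:R - 1) * mu))%N.
  have hQ1 : 1 <= (q ^ K)%:R :> R by rewrite ler1n expn_gt0 ltnW.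
  rewrite truncn_ge_nat; last first.
    apply: mulr_ge0 => //; rewrite subr_ge0 expnS natrM; nra.
  rewrite expnS !natrM.
  set Q := (q ^ K)%:R in hK' hQ hQ1 *.
  have -> : (q%:R * Q - 1) * mu = Q * (q%:R * mu - m%:R) - mu + m%:R * Q by ring.
  lra.
have hs2 := @splits_down _ _ _ _ _ ht hsp.
rewrite expnS /q -expnM -/q in hs2.
have hs3 := @splits_reduce A p q (e * K) _ f hch hs2.
rewrite mulnK ?expn_gt0 ?(ltnW p1) // in hs3.
have hq1ne : q%:R - 1 != 0 :> R by rewrite lt0r_neq0.
have Snu : S (m%:R / (q%:R - 1)).
  split; first by rewrite divr_ge0 // ltW.
  move=> e' e'0.
  have hN := @Nsplit _ _ hs3 e'.
  set j := (e * e' - e')%N.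
  have eq : (q ^ e' = p ^ e' * p ^ j)%N.
    by rewrite -expnD /j subnKC ?leq_pmull // /q -expnM.
  rewrite eq in hN.
  have hN2 := @splits_reduce A p (p ^ e') j _ f hch hN.
  apply: splits_down hN2.
  rewrite leq_divRL ?expn_gt0 ?(ltnW p1) // -(ler_nat R) natrM.
  set nu := m%:R / (q%:R - 1).
  have nu0 : 0 <= nu by rewrite divr_ge0 // ltW.
  have hPe : 1 <= (p ^ e')%:R :> R by rewrite ler1n expn_gt0 ltnW.
  have hPj : 1 <= (p ^ j)%:R :> R by rewrite ler1n expn_gt0 ltnW.
  have ht0 : ((Num.truncn (((p ^ e')%:R - 1) * nu))%:R <= ((p ^ e')%:R - 1) * nu).
    by rewrite truncn_le; apply: mulr_ge0 => //; lra.
  have hNr : (NN q m e')%:R = ((q ^ e')%:R - 1) * nu.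
    apply: (mulIf hq1ne); rewrite Nreal /nu; field; exact: hq1ne.
  rewrite hNr eq natrM.
  set t := (Num.truncn _)%:R in ht0 *.
  set Pe := (p ^ e')%:R in hPe ht0 *; set Pj := (p ^ j)%:R in hPj *.
  have h1 : t * Pj <= (Pe - 1) * nu * Pj by rewrite ler_wpM2r // (le_trans ler01).
  nra.
have := sup_upper_bound hsup Snu.
by [].
Qed.
End Main.

End Aux.
Import Aux.

Theorem mainTheorem5 (p : nat) (lam : R) (e : nat) :
  prime p -> Phi p lam -> (0 < e)%N ->
  [/\ (Num.floor (((p ^ e)%:R - 1) * lam))%:~R = (p ^ e)%:R * truncation p lam e,
      lam <= (p ^ e)%:R * tail p lam e
    & (p ^ e)%:R / ((p ^ e)%:R - 1) * truncation p lam e <= lam].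
Proof.
move=> pp [A [f [hch hF hf0 hnu hl]]] e0.
have p1 := prime_gt1 pp.
have hs := @hsup A p f pp hF hnu.
have l0 : 0 <= lam by rewrite hl /fpt; exact: (sup_upper_bound hs (@S0 A p f hF)).
have l1 : lam <= 1.
  rewrite hl /fpt; apply: ge_sup; first by exists 0; exact: (@S0 A p f hF).
  by move=> x hx; exact: (@Sub_le A p f pp hnu x hx).
set q := (p ^ e)%N.
have q1 : (1 < q)%N by apply: leq_ltn_trans (ltn_expl e p1).
have hq : 1 < q%:R :> R by rewrite ltr1n.
have hq0 : 0 < q%:R :> R by lra.
have hq1 : 0 < q%:R - 1 :> R by rewrite subr_gt0.
rewrite /tail /truncation; case: pselect => [H|nH].
- case: (cid H) => a ha /=.
  have [m [hs1 hm1 hm2]] := @exp_bounds p a p1 lam e ha.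
  rewrite hs1.
  have hm1' : m%:R / (p ^ e)%:R < fpt p f by rewrite -hl.
  have hk := @key A p f pp hch hF hnu e m e0 hm1'.
  rewrite -hl -/q in hk.
  rewrite -/q in hm1 hm2 *.
  have eqm : q%:R * (m%:R / q%:R) = m%:R :> R by rewrite mulrC divfK // lt0r_neq0.
  have hk' : m%:R <= (q%:R - 1) * lam by rewrite ler_pdivrMr // mulrC in hk.
  have hm1'' : m%:R < lam * q%:R by rewrite ltr_pdivrMr // in hm1.
  have hm2' : lam * q%:R <= m.+1%:R by rewrite ler_pdivlMr // in hm2.
  have m0 : 0 <= m%:R :> R by rewrite ler0n.
  have lpos : 0 < lam.
    by apply: le_lt_trans hm1; rewrite divr_ge0 // ltW.
  rewrite -natr1 in hm2'.
  split.
  - rewrite eqm (floor_def (m := Posz m)); first by rewrite -pmulrn.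
    rewrite intrD mulr1z -pmulrn; apply/andP; split; nra.
  - rewrite mulrBr eqm; nra.
  - have -> : q%:R / (q%:R - 1) * (m%:R / q%:R) = m%:R / (q%:R - 1) :> R.
      by field; apply/andP; split; apply: lt0r_neq0.
    exact: hk.
- have lz : lam = 0.
    apply/eqP; rewrite eq_le l0 andbT leNgt; apply/negP => lpos.
    by apply: nH; exact: @exists_exp p lam p1 lpos l1.
  rewrite lz !mulr0 floor0 subrr mulr0 /=; split => //.
Qed.
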